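(* Let $k=2^{\ell}$ with $\ell\ge2$ an integer and $q=4k$. Let $f\in\mathbb F_q[X,Y]$ be a local permutation polynomial whose permutation polynomial tuple consists of the $q$ elements of the group $G_3=\{b^ja^i:0\le j\le 2k-1,\ 0\le i\le 1\}$ (in some order), where $a$ and $b$ are as defined below. Then $f$ has a companion.
   Context: The elements of $\mathbb F_q$ are enumerated as $\mathbb F_q=\{c_0,\dots,c_{q-1}\}$; $\mathfrak S_q$ is the symmetric group of permutations of $\mathbb F_q$, composed right to left, written in cycle notation. $a=(c_0,c_1)(c_2,c_3)\cdots(c_{q-2},c_{q-1})$ and $b=D_1D_2$, where $D_1$ is the $2k$-cycle whose entries in order are: for $i=0,1,\dots,\frac{k-2}{2}$ the pair $c_{2i},c_{2i+2k+1}$; then $c_{k+1},c_{3k}$; then for $j=0,1,\dots,\frac{k-4}{2}$ the pair $c_{k+2j+2},c_{3k+2j+2}$; and $D_2$ is the $2k$-cycle whose entries in order are: for $j=0,1,\dots,\frac{k-4}{2}$ the pair $c_{3k-2-2j},c_{2k-1-2j}$; then $c_{2k},c_k$; then for $i=0,1,\dots,\frac{k-2}{2}$ the pair $c_{4k-1-2i},c_{k-1-2i}$. ($G_3$ is a subgroup of $\mathfrak S_q$ of order $q$ whose non-identity elements have no fixed points.) Every function $\mathbb F_q^2\to\mathbb F_q$ is identified with the unique polynomial in $\mathbb F_q[X,Y]$ of degree $<q$ in each variable representing it. $f$ is a local permutation polynomial (LPP) if $x\mapsto f(x,y_0)$ and $y\mapsto f(x_0,y)$ are permutations of $\mathbb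 F_q$ for all $x_0,y_0$. A permutation polynomial tuple is $(\beta_0,\dots,\beta_{q-1})\in\mathfrak S_q^q$ such that $\beta_i^{-1}\beta_j$ has no fixed point whenever $i\ne j$; LPPs $f$ correspond bijectively to such tuples via $f(x,\beta_i(x))=c_i$ for all $x$ and all $i$. Two LPPs $f,g$ are orthogonal (companions) if for every $(u,v)\in\mathbb F_q^2$ the system $f(X,Y)=u$, $g(X,Y)=v$ has exactly one solution in $\mathbb F_q^2$; a companion of $f$ is an LPP orthogonal to $f$. *)

(* Defs.v *)
From mathcomp Require Import all_boot all_algebra all_field.
Set Implicit Arguments. Unset Strict Implicit. Unset Printing Implicit Defensive.

Definition cycf (F : eqType) (s : seq F) (x : F) : F :=
  if x \in s then nth x s ((index x s).+1 %% size s) else x.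

Section Defs.
Variables (F : finFieldType) (c : nat -> F) (k : nat).

(* a = (c_0,c_1)(c_2,c_3)...(c_{q-2},c_{q-1}), q = 4k *)
Definition perm_a (x : F) : F :=
  foldr (fun m y => cycf [:: c (2 * m); c (2 * m).+1] y) x (iota 0 (2 * k)).

Definition D1_list : seq F :=
  flatten [seq [:: c (2 * i); c (2 * i + 2 * k + 1)] | i <- iota 0 k./2]
  ++ [:: c k.+1; c (3 * k)]
  ++ flatten [seq [:: c (k + 2 * j + 2); c (3 * k + 2 * j + 2)] | j <- iota 0 (k./2 - 1)].

Definition D2_list : seq F :=
  flatten [seq [:: c (3 * k - 2 - 2 * j); c (2 * k - 1 - 2 * j)] | j <- iota 0 (k./2 - 1)]
  ++ [:: c (2 * k); c k]
  ++ flatten [seq [:: c (4 * k - 1 - 2 * i); c (k - 1 - 2 * i)] | i <- iota 0 k./2].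

Definition perm_b (x : F) : F := cycf D1_list (cycf D2_list x).

Definition G3_elt (j i : nat) (x : F) : F := iter j perm_b (iter i perm_a x).
End Defs.

Definition is_LPP (F : finFieldType) (f : F -> F -> F) : Prop :=
  (forall y0 : F, bijective (fun x => f x y0)) /\
  (forall x0 : F, bijective (fun y => f x0 y)).

Definition orthogonal (F : finFieldType) (f g : F -> F -> F) : Prop :=
  forall u v : F, exists! p : F * F, f p.1 p.2 = u /\ g p.1 p.2 = v.

Definition has_companion (F : finFieldType) (f : F -> F -> F) : Prop :=
  exists g : F -> F -> F, is_LPP g /\ orthogonal f g.

(* Main.v *)
Require Import Defs.
From mathcomp Require Import all_boot all_algebra all_field zify.
Set Implicit Arguments. Unset Strict Implicit. Unset Printing Implicit Defensive.
Ltac oddcase := repeat match goal with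
  | |- context [odd ?x] => let H := fresh "Ho" in have H := odd_double_half x; move: H; case: (odd x) => /= H
  end.
Ltac arith_ := repeat (oddcase; try (case: ifP => /= ?)); try lia.



Lemma size_flat2 (f g : nat -> nat) (s : seq nat) :
  size (flatten [seq [:: f i; g i] | i <- s]) = 2 * size s.
Proof. elim: s => //= x s IH; rewrite IH; lia. Qed.

Lemma nth_flat2 (f g : nat -> nat) n s m : m < 2 * n ->
  nth 0 (flatten [seq [:: f i; g i] | i <- iota s n]) m =
  if odd m then g (s + m./2) else f (s + m./2).
Proof.
elim: n s m => [|n IH] s m; first by rewrite muln0.
move=> Hm /=. case: m Hm => [|[|m]] Hm /=; rewrite ?addn0 //.
rewrite IH; last by lia.
by rewrite negbK addSnnS.
Qed.

Definition I1 k := flatten [seq [:: 2*i; 2*i+2*k+1] | i <- iota 0 k./2]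
  ++ [:: k.+1; 3*k] ++ flatten [seq [:: k+2*j+2; 3*k+2*j+2] | j <- iota 0 (k./2 - 1)].
Definition I2 k := flatten [seq [:: 3*k-2-2*j; 2*k-1-2*j] | j <- iota 0 (k./2-1)]
  ++ [:: 2*k; k] ++ flatten [seq [:: 4*k-1-2*i; k-1-2*i] | i <- iota 0 k./2].

Definition d1 k m := if m < k then (if odd m then m + 2*k else m) else if m == k then k+1
  else if m == k+1 then 3*k else (if odd m then m+2*k-1 else m).
Definition d2 k m := if m < k-2 then (if odd m then 2*k - m else 3*k-2-m) else if m == k-2 then 2*k
  else if m == k-1 then k else (if odd m then 2*k - m else 5*k-1-m).

Lemma nth_I1 k m : 4 <= k -> ~~ odd k -> m < 2*k -> nth 0 (I1 k) m = d1 k m.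
Proof.
move=> H4 Hk Hm. have Hk2 := odd_double_half k. rewrite (negbTE Hk) /= in Hk2.
rewrite /I1 nth_cat size_flat2 size_iota /d1.
case: ifP => H1.
  rewrite (nth_flat2 (fun i => 2*i) (fun i => 2*i+2*k+1)); last by lia.
  have -> : m < k by lia. arith_.
rewrite nth_cat [size _]/=. case: ifP => H2.
  case E: (m - 2 * k./2) => [|[|n]] /=; arith_.
rewrite (nth_flat2 (fun j => k+2*j+2) (fun j => 3*k+2*j+2)); last by lia.
arith_.
Qed.

Lemma nth_I2 k m : 4 <= k -> ~~ odd k -> m < 2*k -> nth 0 (I2 k) m = d2 k m.
Proof.
move=> H4 Hk Hm. have Hk2 := odd_double_half k. rewrite (negbTE Hk) /= in Hk2.
rewrite /I2 nth_cat size_flat2 size_iota /d2.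
case: ifP => H1.
  rewrite (nth_flat2 (fun j => 3*k-2-2*j) (fun j => 2*k-1-2*j)); last by lia.
  have -> : m < k - 2 by lia. arith_.
rewrite nth_cat [size _]/=. case: ifP => H2.
  case E: (m - 2 * (k./2 - 1)) => [|[|n]] /=; arith_.
rewrite (nth_flat2 (fun i => 4*k-1-2*i) (fun i => k-1-2*i)); last by lia.
arith_.
Qed.


Ltac oddone x := let H := fresh "Ho" in have H := odd_double_half x; move: H; case: (odd x) => /= H.
Ltac astep := match goal with
  | |- context [odd ?x] => is_var x; oddone x
  | |- context [if ?c then _ else _] =>
      lazymatch c with odd _ => fail | _ =>
      tryif (match c with context [if _ then _ else _] => idtac end) then fail else
      let H := fresh "Hc" in case H: c => /= end
  | |- context [odd ?x] => oddone x
  end.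
Ltac arith := repeat astep; try lia.

Definition xo n := if odd n then n.-1 else n.+1.
Definition piK k m := if odd m then (if m < k then k-1-m else 3*k-1-m) else 2*k-1-m.
Definition rho k m := if odd m then 2*k-1-m else (if m < k then k-1-m else 3*k-1-m).

Lemma mod_lt2 x n : x < 2 * n -> x %% n = if x < n then x else x - n.
Proof.
move=> H. case: ifP => H1; first by rewrite modn_small.
have -> : x = (x - n) + n by lia.
rewrite modnDr modn_small; lia.
Qed.

Section K.
Variables (k h : nat) (Hk : k = 4 * h) (Hh : 0 < h).

Lemma d1_lt m : m < 2*k -> d1 k m < 4*k.
Proof. rewrite /d1 => ?; arith. Qed.
Lemma d2_lt m : m < 2*k -> d2 k m < 4*k.
Proof. rewrite /d2 => ?; arith. Qed.
Lemma d1_inj m m' : m < 2*k -> m' < 2*k -> d1 k m = d1 k m' -> m = m'.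
Proof. rewrite /d1 => ? ?. arith. Qed.
Lemma d2_inj m m' : m < 2*k -> m' < 2*k -> d2 k m = d2 k m' -> m = m'.
Proof. rewrite /d2 => ? ?. arith. Qed.
Lemma d12_ne m m' : m < 2*k -> m' < 2*k -> d1 k m = d2 k m' -> False.
Proof. rewrite /d1 /d2 => ? ?. arith. Qed.
Lemma pi_lt m : m < 2*k -> piK k m < 2*k.
Proof. rewrite /piK => ?; arith. Qed.
Lemma xo_d1 m : m < 2*k -> xo (d1 k m) = d2 k (piK k m).
Proof. rewrite /xo /d1 /d2 /piK => ?. arith. Qed.
Lemma xo_d2 m : m < 2*k -> xo (d2 k m) = d1 k (rho k m).
Proof. rewrite /xo /d1 /d2 /rho => ?. arith. Qed.
Lemma rho_lt m : m < 2*k -> rho k m < 2*k.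
Proof. rewrite /rho => ?; arith. Qed.
Lemma rho_step m : m < 2*k -> rho k (m.+1 %% (2*k)) = (rho k m + (k - 1)) %% (2*k).
Proof.
move=> Hm. rewrite (mod_lt2 (n:=2*k)) ?(mod_lt2 (x:=rho k m + _) (n:=2*k)); rewrite /rho; arith.
Qed.
Lemma pi_step m : m < 2*k -> piK k (m.+1 %% (2*k)) = (piK k m + (k - 1)) %% (2*k).
Proof.
move=> Hm. rewrite (mod_lt2 (n:=2*k)) ?(mod_lt2 (x:=piK k m + _) (n:=2*k)); rewrite /piK; arith.
Qed.
End K.



Lemma cycf2 (T : eqType) (u v z : T) : u != v ->
  cycf [:: u; v] z = if z == u then v else if z == v then u else z.
Proof.
move=> Huv. rewrite /cycf !inE. case: (z =P u) => [->|Hu] /=.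
  by rewrite eqxx.
case: (z =P v) => [->|Hv] /=; last by [].
by rewrite (negbTE Huv) eqxx.
Qed.

Lemma cycf_nth (T : eqType) (s : seq T) x0 m : uniq s -> m < size s ->
  cycf s (nth x0 s m) = nth x0 s (m.+1 %% size s).
Proof.
move=> Hu Hm. rewrite /cycf mem_nth // index_uniq //.
apply: set_nth_default. rewrite ltn_pmod //. by case: (size s) Hm.
Qed.

Lemma cycf_out (T : eqType) (s : seq T) x : x \notin s -> cycf s x = x.
Proof. by rewrite /cycf => /negbTE ->. Qed.

Lemma modSmod m d : (m %% d).+1 %% d = m.+1 %% d.
Proof. by rewrite -[(m %% d).+1]addn1 -[m.+1]addn1 modnDml. Qed.

Section FLevel.
Variables (F : finFieldType) (c : nat -> F) (k h : nat).
Hypotheses (Hk : k = 4 * h) (Hh : 0 < h).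
Hypothesis c_inj : forall m n, m < 4 * k -> n < 4 * k -> c m = c n -> m = n.
Hypothesis c_surj : forall x : F, exists2 n, n < 4 * k & c n = x.

Lemma ceq m n : m < 4 * k -> n < 4 * k -> (c m == c n) = (m == n).
Proof. move=> Hm Hn. apply/eqP/eqP => [|->//]. exact: c_inj. Qed.

Lemma D1_eq : D1_list c k = map c (I1 k).
Proof. by rewrite /D1_list /I1 !map_cat !map_flatten -!map_comp. Qed.
Lemma D2_eq : D2_list c k = map c (I2 k).
Proof. by rewrite /D2_list /I2 !map_cat !map_flatten -!map_comp. Qed.

Lemma k4 : 4 <= k. Proof. lia. Qed.
Lemma kev : ~~ odd k. Proof. by rewrite Hk oddM. Qed.

Lemma size_I1 : size (I1 k) = 2 * k.
Proof. rewrite /I1 !size_cat !size_flat2 !size_iota /=. have := odd_double_half k. rewrite (negbTE kev). lia. Qed.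
Lemma size_I2 : size (I2 k) = 2 * k.
Proof. rewrite /I2 !size_cat !size_flat2 !size_iota /=. have := odd_double_half k. rewrite (negbTE kev). lia. Qed.

Lemma nth_I12 j : j < 4 * k -> nth 0 (I1 k ++ I2 k) j = if j < 2 * k then d1 k j else d2 k (j - 2 * k).
Proof.
move=> Hj. rewrite nth_cat size_I1. case: ifP => H.
  by rewrite nth_I1 // ?k4 ?kev.
by rewrite nth_I2 // ?k4 ?kev; lia.
Qed.

Lemma uniq_I12 : uniq (I1 k ++ I2 k).
Proof.
apply/(uniqP 0) => i j. rewrite !inE size_cat size_I1 size_I2 => Hi Hj.
rewrite !nth_I12; try lia.
case: ifP => H1; case: ifP => H2 E.
- apply: (d1_inj Hk Hh) => //; lia.
- exfalso; apply: (d12_ne Hk Hh _ _ E); lia.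
- exfalso; apply: (d12_ne Hk Hh _ _ (esym E)); lia.
- have := d2_inj Hk Hh _ _ E. lia.
Qed.

Lemma I12_lt n : n \in I1 k ++ I2 k -> n < 4 * k.
Proof.
case/(nthP 0) => j; rewrite size_cat size_I1 size_I2 => Hj <-.
rewrite nth_I12; last lia.
case: ifP => H; [apply: (d1_lt Hk Hh) | apply: (d2_lt Hk Hh)]; lia.
Qed.

Lemma I12_cover n : n < 4 * k -> n \in I1 k ++ I2 k.
Proof.
move=> Hn.
have Hsub : {subset I1 k ++ I2 k <= iota 0 (4 * k)}.
  by move=> x Hx; rewrite mem_iota add0n I12_lt.
have Hs : size (iota 0 (4 * k)) <= size (I1 k ++ I2 k).
  by rewrite size_iota size_cat size_I1 size_I2; lia.
have H := (uniq_min_size uniq_I12 Hsub Hs).2.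
by rewrite H mem_iota; lia.
Qed.

Definition P (t : bool) m := c (if t then d2 k (m %% (2 * k)) else d1 k (m %% (2 * k))).

Lemma k2pos : 0 < 2 * k. Proof. lia. Qed.
Lemma modlt m : m %% (2 * k) < 2 * k. Proof. by rewrite ltn_pmod // k2pos. Qed.

Lemma uniq_map12 : uniq (map c (I1 k ++ I2 k)).
Proof.
rewrite map_inj_in_uniq ?uniq_I12 // => x y Hx Hy. apply: c_inj; exact: I12_lt.
Qed.

Lemma nth_D1 m : m < 2 * k -> nth (c 0) (map c (I1 k)) m = c (d1 k m).
Proof. move=> Hm. by rewrite (nth_map 0) ?size_I1 // nth_I1 // ?k4 ?kev. Qed.
Lemma nth_D2 m : m < 2 * k -> nth (c 0) (map c (I2 k)) m = c (d2 k m).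
Proof. move=> Hm. by rewrite (nth_map 0) ?size_I2 // nth_I2 // ?k4 ?kev. Qed.

Lemma notin_D2 m : m < 2 * k -> c (d1 k m) \notin map c (I2 k).
Proof.
move=> Hm. apply/mapP => [[n Hn E]].
have Hn' : n < 4 * k by apply: I12_lt; rewrite mem_cat Hn orbT.
have E' := c_inj (d1_lt Hk Hh Hm) Hn' E.
case/(nthP 0): Hn => j. rewrite size_I2 => Hj. rewrite nth_I2 ?k4 ?kev // => Ej.
apply: (d12_ne Hk Hh (m:=m) (m':=j)) => //. by rewrite Ej.
Qed.

Lemma notin_D1 m : m < 2 * k -> c (d2 k m) \notin map c (I1 k).
Proof.
move=> Hm. apply/mapP => [[n Hn E]].
have Hn' : n < 4 * k by apply: I12_lt; rewrite mem_cat Hn.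
have E' := c_inj (d2_lt Hk Hh Hm) Hn' E.
case/(nthP 0): Hn => j. rewrite size_I1 => Hj. rewrite nth_I1 ?k4 ?kev // => Ej.
apply: (d12_ne Hk Hh (m:=j) (m':=m)) => //. by rewrite Ej.
Qed.

Lemma uniq_D1 : uniq (map c (I1 k)).
Proof. by have := uniq_map12; rewrite map_cat cat_uniq => /and3P []. Qed.
Lemma uniq_D2 : uniq (map c (I2 k)).
Proof. by have := uniq_map12; rewrite map_cat cat_uniq => /and3P []. Qed.

Lemma b_P1 m : perm_b c k (P false m) = P false m.+1.
Proof.
rewrite /perm_b /P /= D1_eq D2_eq (cycf_out (notin_D2 (modlt m))).
rewrite -(nth_D1 (modlt m)) cycf_nth ?uniq_D1 ?size_map ?size_I1 ?modlt //.
by rewrite modSmod nth_D1 ?modlt.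
Qed.

Lemma b_P2 m : perm_b c k (P true m) = P true m.+1.
Proof.
rewrite /perm_b /P /= D1_eq D2_eq.
rewrite -(nth_D2 (modlt m)) cycf_nth ?uniq_D2 ?size_map ?size_I2 ?modlt //.
by rewrite modSmod nth_D2 ?modlt // (cycf_out (notin_D1 (modlt _))).
Qed.

Lemma foldr_a s len n : n < 4 * k -> s + len <= 2 * k ->
  foldr (fun m y => cycf [:: c (2 * m); c (2 * m).+1] y) (c n) (iota s len)
  = c (if (s <= n./2) && (n./2 < s + len) then xo n else n).
Proof.
move=> Hn. elim: len s => [|len IH] s Hs.
  by rewrite addn0; case: (leqP s n./2) => H //=; rewrite ltnNge H.
rewrite /= IH; last lia.
set N := (if _ then xo n else n).
have HN : N < 4 * k by rewrite /N /xo; arith.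
rewrite cycf2; last by rewrite ceq; lia.
rewrite !ceq //; try lia.
rewrite -!fun_if. congr c. rewrite /N /xo. arith.
Qed.

Lemma a_c n : n < 4 * k -> perm_a c k (c n) = c (xo n).
Proof.
move=> Hn. rewrite /perm_a foldr_a //.
have -> : (0 <= n./2) && (n./2 < 0 + 2 * k) by arith.
by [].
Qed.

Lemma a_P1 m : perm_a c k (P false m) = P true (piK k (m %% (2 * k))).
Proof.
rewrite /P /= a_c ?(d1_lt Hk Hh) ?modlt // (xo_d1 Hk Hh) ?modlt //.
by rewrite (modn_small (pi_lt Hk Hh (modlt m))).
Qed.

Lemma a_P2 m : perm_a c k (P true m) = P false (rho k (m %% (2 * k))).
Proof.
rewrite /P /= a_c ?(d2_lt Hk Hh) ?modlt // (xo_d2 Hk Hh) ?modlt //.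
by rewrite (modn_small (rho_lt Hk Hh (modlt m))).
Qed.

Lemma P_cover x : exists t m, x = P t m.
Proof.
have [n Hn <-] := c_surj x.
have := I12_cover Hn. rewrite mem_cat => /orP [] /(nthP 0) [j].
- rewrite size_I1 => Hj <-. exists false, j. by rewrite /P modn_small // nth_I1 ?k4 ?kev.
- rewrite size_I2 => Hj <-. exists true, j. by rewrite /P modn_small // nth_I2 ?k4 ?kev.
Qed.

Lemma iter_bP t m j : iter j (perm_b c k) (P t m) = P t (m + j).
Proof.
elim: j => [|j IH]; first by rewrite addn0.
rewrite iterS IH addnS. case: t {IH}; [exact: b_P2 | exact: b_P1].
Qed.

Lemma P_mod t m : P t (m %% (2 * k)) = P t m.
Proof. by rewrite /P modn_mod. Qed.

Lemma L1 x : iter (2 * k) (perm_b c k) x = x.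
Proof. have [t [m ->]] := P_cover x. by rewrite iter_bP -P_mod modnDr P_mod. Qed.

Lemma L2 x : perm_a c k (perm_a c k x) = x.
Proof.
have [n Hn <-] := c_surj x.
rewrite !a_c //; first (congr c; rewrite /xo; arith).
rewrite /xo; arith.
Qed.

Lemma L3 x : perm_a c k (perm_b c k x) = iter (k - 1) (perm_b c k) (perm_a c k x).
Proof.
have [[] [m ->]] := P_cover x.
- by rewrite b_P2 !a_P2 iter_bP -[RHS]P_mod -(rho_step Hk Hh) ?modlt // modSmod.
- by rewrite b_P1 !a_P1 iter_bP -[RHS]P_mod -(pi_step Hk Hh) ?modlt // modSmod.
Qed.
End FLevel.



Definition aj k j e := if e == 0 then
   (if odd j then (if j < k then j+k else if j == k+1 then 0 else 3*k+1-j)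
    else (if j < k then j+1 else 2*k-j))
 else (if odd j then (if j < k then (if j+k+2 < 2*k then j+k+2 else j+2-k)
                      else (if 3*k+3-j < 2*k then 3*k+3-j else k+3-j))
       else (if j < k then j+3 else 2*k+2-j)).
Definition ae k j e := if e == 0 then (if j < k then 1 else 0) else (if j < k then 0 else 1).
Definition tj k j e := if e == 0 then
   (if odd j then (if j < k then 2*j else if 2*j <= 3*k+1 then 3*k+1-2*j else 5*k+1-2*j)
    else (if j < k then 2*j+1 else if j == k then 0 else 4*k-2*j))
 else (if odd j then (if j < k then (if j == k-1 then 0 else 2*j+2)
                      else (if 2*j <= 3*k+3 then 3*k+3-2*j else 5*k+3-2*j))
       else (if j < k then 2*j+3 else if 2*j <= 2*k+2 then 2*k+2-2*j else 4*k+2-2*j)).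
Definition te k j (e : nat) := if j < k then 1 else 0.
Definition rm k j := if odd j then (if j <= k then k - j else 3*k - j) else (if j == 0 then 0 else 2*k - j).

Section Arith.
Variables (k h : nat) (Hk : k = 4 * h) (Hh : 0 < h).

Lemma aj_lt j e : j < 2*k -> aj k j e < 2*k.
Proof. rewrite /aj => ?; arith. Qed.
Lemma tj_lt j e : j < 2*k -> tj k j e < 2*k.
Proof. rewrite /tj => ?; arith. Qed.
Lemma ae_lt j e : ae k j e < 2.
Proof. rewrite /ae; arith. Qed.
Lemma te_lt j e : te k j e < 2.
Proof. rewrite /te; arith. Qed.

Lemma a_inj_e j e j' e' : j < 2*k -> j' < 2*k -> e < 2 -> e' < 2 ->
  aj k j e = aj k j' e' -> ae k j e = ae k j' e' -> e = e'.
Proof. rewrite /aj /ae => ? ? ? ?; arith. Qed.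
Lemma a_inj_j j e j' e' : j < 2*k -> j' < 2*k -> e < 2 -> e' < 2 ->
  aj k j e = aj k j' e' -> ae k j e = ae k j' e' -> j = j'.
Proof. rewrite /aj /ae => ? ? ? ?; arith. Qed.
Lemma t_inj_e j e j' e' : j < 2*k -> j' < 2*k -> e < 2 -> e' < 2 ->
  tj k j e = tj k j' e' -> te k j e = te k j' e' -> e = e'.
Proof. rewrite /tj /te => ? ? ? ?; arith. Qed.
Lemma t_inj_j j e j' e' : j < 2*k -> j' < 2*k -> e < 2 -> e' < 2 ->
  tj k j e = tj k j' e' -> te k j e = te k j' e' -> j = j'.
Proof. rewrite /tj /te => ? ? ? ?; arith. Qed.

Lemma rm_spec j : j < 2*k -> ((k-1)*j) %% (2*k) = rm k j.
Proof.
move=> Hj. have Hr : rm k j < 2*k by rewrite /rm; arith.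
have [Q HQ] : exists Q, (k-1)*j = Q * (2*k) + rm k j.
  rewrite /rm. have := odd_double_half j. case: (odd j) => /= Ho.
  - case: ifP => H.
      exists (j./2). rewrite -Ho. nia.
    exists (j./2 - 1). rewrite -Ho. nia.
  - case: ifP => H.
      exists 0. have -> : j = 0 by lia. by rewrite muln0.
    exists (j./2 - 1). rewrite -Ho. nia.
by rewrite HQ modnMDl modn_small.
Qed.

Lemma comp0 j e : j < 2*k -> e < 2 -> te k j e = 0 ->
  ae k j e = e /\ (tj k j e + j) %% (2*k) = aj k j e.
Proof.
move=> Hj He. rewrite (mod_lt2 (n:=2*k)); last first.
  have := tj_lt e Hj. lia.
rewrite /te /ae /tj /aj. arith.
Qed.

Lemma comp1 j e : j < 2*k -> e < 2 -> te k j e = 1 ->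
  ae k j e = 1 - e /\ (tj k j e + rm k j) %% (2*k) = aj k j e.
Proof.
move=> Hj He. rewrite (mod_lt2 (n:=2*k)); last first.
  have := tj_lt e Hj. have : rm k j < 2*k by rewrite /rm; arith. lia.
rewrite /te /ae /tj /aj /rm. arith.
Qed.
End Arith.


Section Mate.
Variables (T : finType) (a b : T -> T) (k h : nat).
Hypotheses (Hk : k = 4 * h) (Hh : 0 < h) (cardT : #|T| = 4 * k).
Hypotheses (L1 : forall x, iter (2 * k) b x = x) (L2 : forall x, a (a x) = x)
  (L3 : forall x, a (b x) = iter (k - 1) b (a x)).

Definition lab := ('I_(2 * k) * 'I_2)%type.
Definition act (d : lab) (x : T) := iter d.1 b (iter d.2 a x).
Hypothesis reg : forall x (d d' : lab), act d x = act d' x -> d = d'.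

Lemma card_lab : #|{: lab}| = 4 * k.
Proof. rewrite card_prod !card_ord. lia. Qed.

Lemma iter_mod j x : iter j b x = iter (j %% (2 * k)) b x.
Proof.
rewrite {1}(divn_eq j (2 * k)) iterD.
elim: (j %/ (2 * k)) => [|q IH]; first by rewrite mul0n.
by rewrite mulSn iterD IH L1.
Qed.

Lemma a_iter j x : a (iter j b x) = iter ((k - 1) * j) b (a x).
Proof.
elim: j => [|j IH]; first by rewrite muln0.
by rewrite iterS L3 IH -iterD mulnS.
Qed.

Definition alpha (d : lab) : lab :=
  (Ordinal (@aj_lt k h Hk Hh d.1 d.2 (ltn_ord d.1)), Ordinal (@ae_lt k h Hk Hh d.1 d.2)).
Definition theta (d : lab) : lab :=
  (Ordinal (@tj_lt k h Hk Hh d.1 d.2 (ltn_ord d.1)), Ordinal (@te_lt k h Hk Hh d.1 d.2)).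

Lemma act_comp d x : act (theta d) (act d x) = act (alpha d) x.
Proof.
case: d => [[j Hj] [e He]]. rewrite /act /theta /alpha /=.
have := @te_lt k h Hk Hh j e.
case E: (te k j e) => [|[|n]] // _.
- have [Hae Hm] := comp0 Hk Hh Hj He E.
  by rewrite /= -iterD iter_mod Hm Hae.
- have [Hae Hm] := comp1 Hk Hh Hj He E.
  rewrite /= a_iter -iterD iter_mod -modnDmr (rm_spec Hk Hh Hj) Hm Hae.
  by case: e He {Hae Hm E} => [|[|e]] //= _; rewrite L2.
Qed.

Lemma alpha_inj : injective alpha.
Proof.
case=> [[j Hj] [e He]] [[j' Hj'] [e' He']] E.
have E1 := congr1 (fun d => val d.1) E. have E2 := congr1 (fun d => val d.2) E.
simpl in E1, E2.
have ee := a_inj_e Hk Hh Hj Hj' He He' E1 E2.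
have jj := a_inj_j Hk Hh Hj Hj' He He' E1 E2.
subst. congr pair; exact: val_inj.
Qed.

Lemma theta_inj : injective theta.
Proof.
case=> [[j Hj] [e He]] [[j' Hj'] [e' He']] E.
have E1 := congr1 (fun d => val d.1) E. have E2 := congr1 (fun d => val d.2) E.
simpl in E1, E2.
have ee := t_inj_e Hk Hh Hj Hj' He He' E1 E2.
have jj := t_inj_j Hk Hh Hj Hj' He He' E1 E2.
subst. congr pair; exact: val_inj.
Qed.

Lemma b_inj : injective b.
Proof.
move=> x y E. have e : 2 * k = (2 * k - 1).+1 by lia.
by rewrite -(L1 x) -(L1 y) e !iterSr E.
Qed.

Lemma a_inj : injective a.
Proof. exact: can_inj L2. Qed.

Lemma iter_inj (f : T -> T) n : injective f -> injective (iter n f).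
Proof. move=> Hf. elim: n => [|n IH] x y //= /Hf. exact: IH. Qed.

Lemma act_inj d : injective (act d).
Proof. by move=> x y /(iter_inj b_inj) /(iter_inj a_inj). Qed.

Lemma act_onto x y : exists d, act d x = y.
Proof.
have inj : injective (fun d => act d x) by move=> d d' /reg.
have /codomP [d ->] := @inj_card_onto _ _ _ inj (eq_leq (etrans cardT (esym card_lab))) y.
by exists d.
Qed.

Lemma k2pos' : 0 < 2 * k. Proof. lia. Qed.
Definition d0 : lab := (Ordinal k2pos', ord0).
Definition lab_of x y : lab := odflt d0 [pick d | act d x == y].

Lemma lab_ofP x y : act (lab_of x y) x = y.
Proof.
rewrite /lab_of; case: pickP => [d /eqP //|H].
have [d Hd] := act_onto x y. by move: (H d); rewrite Hd eqxx.
Qed.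

Lemma lab_of_act d x : lab_of x (act d x) = d.
Proof. apply: (reg (x := x)). by rewrite lab_ofP. Qed.

Definition gm x y := act (alpha (lab_of x y)) x.

Lemma gm_act d x : gm x (act d x) = act (alpha d) x.
Proof. by rewrite /gm lab_of_act. Qed.

Lemma mate_props :
  [/\ forall y0, bijective (fun x => gm x y0),
      forall x0, bijective (fun y => gm x0 y) &
      forall d, bijective (fun x => gm x (act d x))].
Proof.
split.
- move=> y0. apply: injF_bij => x x'. rewrite /gm.
  set d := lab_of x y0. set d' := lab_of x' y0.
  have Hd : act d x = y0 by rewrite lab_ofP.
  have Hd' : act d' x' = y0 by rewrite lab_ofP.
  rewrite -!act_comp Hd Hd' => /reg /theta_inj Edd.
  by apply: (act_inj (d := d)); rewrite Hd Edd Hd'.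
- move=> x0. apply: injF_bij => y y'. rewrite /gm => /reg /alpha_inj E.
  by rewrite -(lab_ofP x0 y) -(lab_ofP x0 y') E.
- move=> d. apply: injF_bij => x x'. rewrite !gm_act. exact: act_inj.
Qed.
End Mate.


Theorem theorem4p10
  (l : nat) (hl : 2 <= l)
  (F : finFieldType) (hF : #|F| = 4 * 2 ^ l)
  (c : nat -> F)
  (c_inj : forall m n, m < 4 * 2 ^ l -> n < 4 * 2 ^ l -> c m = c n -> m = n)
  (c_surj : forall x : F, exists2 n, n < 4 * 2 ^ l & c n = x)
  (f : F -> F -> F) (hf : is_LPP f)
  (beta : nat -> F -> F)
  (hbeta_f : forall i x, i < 4 * 2 ^ l -> f x (beta i x) = c i)
  (hbeta_inj : forall i i', i < 4 * 2 ^ l -> i' < 4 * 2 ^ l ->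
      (forall x, beta i x = beta i' x) -> i = i')
  (hbeta_G3 : forall i, i < 4 * 2 ^ l ->
      exists j, exists e, [/\ j < 2 * 2 ^ l, e < 2 &
        forall x, beta i x = G3_elt c (2 ^ l) j e x])
  (hG3_beta : forall j e, j < 2 * 2 ^ l -> e < 2 ->
      exists2 i, i < 4 * 2 ^ l & forall x, beta i x = G3_elt c (2 ^ l) j e x) :
  has_companion f.
Proof.
set k := 2 ^ l in hF c_inj c_surj hbeta_f hbeta_inj hbeta_G3 hG3_beta *.
have Hk : k = 4 * 2 ^ (l - 2) by rewrite /k -{1}(subnKC hl) expnD.
have Hh : 0 < 2 ^ (l - 2) by rewrite expn_gt0.
pose a := perm_a c k. pose b := perm_b c k.
have L1 := L1 Hk Hh c_inj c_surj.
have L2 := L2 Hk Hh c_inj c_surj.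
have L3 := L3 Hk Hh c_inj c_surj.
have fx_inj x : injective (f x) by have [_ /(_ x) /bij_inj] := hf.
have sdef (i : 'I_(4 * k)) : exists d : lab k, forall x, beta i x = act a b d x.
  have [j [e [Hj He Hx]]] := hbeta_G3 i (ltn_ord i).
  by exists (Ordinal Hj, Ordinal He).
have k2 : 0 < 2 * k by rewrite Hk; lia.
pose dd : lab k := (Ordinal k2, ord0).
pose s (i : 'I_(4 * k)) : lab k :=
  odflt dd [pick d : lab k | [forall x, beta i x == act a b d x]].
have sP (i : 'I_(4 * k)) x : beta i x = act a b (s i) x.
  rewrite /s; case: pickP => [d /forallP H|H]; first exact/eqP.
  have [d Hd] := sdef i. move: (H d) => /forallP []. by move=> y; rewrite Hd.
have s_inj : injective s.
  move=> i i' E; apply: ord_inj; apply: hbeta_inj => // x; by rewrite !sP E.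
have s_onto d : exists i, s i = d.
  have /codomP [i ->] := @inj_card_onto _ _ _ s_inj
    (eq_leq (etrans (@card_lab F k _ Hk Hh hF) (esym (card_ord _)))) d.
  by exists i.
have reg x (d d' : lab k) : act a b d x = act a b d' x -> d = d'.
  have [i <-] := s_onto d. have [i' <-] := s_onto d'.
  rewrite -!sP => E.
  have Ec : c i = c i' by rewrite -(hbeta_f i x) ?ltn_ord // -(hbeta_f i' x) ?ltn_ord // E.
  by rewrite (ord_inj (c_inj _ _ (ltn_ord i) (ltn_ord i') Ec)).
have [G1 G2 G3] := mate_props Hk Hh hF L1 L2 L3 reg.
exists (gm a b Hk Hh hF); split; first by split.
move=> u v.
have [n Hn <-] := c_surj u.
have [j [e [Hj He Hx]]] := hbeta_G3 n Hn.
pose d : lab k := (Ordinal Hj, Ordinal He).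
have Hbd x : beta n x = act a b d x by rewrite Hx.
have [ginv Hg1 Hg2] := G3 d.
exists (ginv v, act a b d (ginv v)); split.
  split; first by rewrite /= -Hbd hbeta_f.
  exact: Hg2.
case=> x y [] /= Hf Hgm.
have Ey : y = act a b d x.
  apply: (fx_inj x). by rewrite Hf -Hbd hbeta_f.
subst y. have -> : x = ginv v by rewrite -Hgm Hg1.
by [].
Qed.
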